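(* For every $n\geq 1$, the Fibonacci-sum set-graph $G^F_{A^{(n)}}$ is connected.
   Context: Let $\mathcal{F}=\{f_m\}_{m\ge 0}$ be the Fibonacci numbers, $f_0=0$, $f_1=1$, $f_m=f_{m-1}+f_{m-2}$. For $n\in\mathbb{N}$ let $A^{(n)}=\{1,2,\dots,n\}$. The Fibonacci-sum set-graph $G^F_{A^{(n)}}$ is the multigraph (loops and multiple edges allowed) whose vertices are in bijection with the nonempty subsets of $A^{(n)}$; between the vertices corresponding to distinct subsets $S,T$ there is one edge for each pair $(i',j')$ with $i'\in S$, $j'\in T$, $i'\neq j'$ and $i'+j'\in\mathcal{F}$, and at the vertex corresponding to $S$ there is one loop for each pair of distinct elements $i',j'\in S$ with $i'+j'\in\mathcal{F}$. *)

(* Defs.v *)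
From mathcomp Require Import all_boot.
From Stdlib Require Import Relation_Operators.
Set Implicit Arguments. Unset Strict Implicit. Unset Printing Implicit Defensive.

Fixpoint fib (m : nat) : nat :=
  match m with
  | 0 => 0
  | 1 => 1
  | (k.+1 as k1).+1 => fib k1 + fib k
  end.

Definition isFib (m : nat) : Prop := exists k, fib k = m.

(* A^(n) = {1,...,n}, realised inside the finite type 'I_n.+1 = {0,...,n}. *)
Definition A (n : nat) : {set 'I_n.+1} := [set i : 'I_n.+1 | 0 < i].

Definition is_vertex (n : nat) (S : {set 'I_n.+1}) : Prop :=
  S \subset A n /\ S != set0.

(* Distinct vertices S, T are joined by at least one edge iff there is a pair
   (i', j') with i' in S, j' in T, i' <> j', i' + j' Fibonacci.
   (Loops and edge multiplicities are irrelevant to connectivity.) *)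
Definition adjF (n : nat) (S T : {set 'I_n.+1}) : Prop :=
  is_vertex S /\ is_vertex T /\ S <> T /\
  exists i j : 'I_n.+1, i \in S /\ j \in T /\ i <> j /\ isFib (i + j).

Definition FibSumSetGraph_connected (n : nat) : Prop :=
  forall S T : {set 'I_n.+1}, is_vertex S -> is_vertex T ->
    clos_refl_trans _ (@adjF n) S T.

(* Main.v *)
Require Import Defs.
From mathcomp Require Import all_boot.
From Stdlib Require Import Relation_Operators.
From mathcomp Require Import zify.

Lemma fibSS m : fib m.+2 = fib m.+1 + fib m.
Proof. by []. Qed.

Lemma fib_mono m p : m <= p -> fib m <= fib p.
Proof.
move=> h; rewrite -(subnKC h); elim: (p - m) => [|d IH]; first by rewrite addn0.
apply: (leq_trans IH); rewrite addnS.
case: (m + d) => [|q] //; rewrite fibSS; exact: leq_addr.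
Qed.

Lemma fib_pos m : 0 < m -> 0 < fib m.
Proof. move=> h; have := fib_mono 1 m h; done. Qed.

Lemma fib_bracket i : 0 < i -> exists k, 2 <= k /\ fib k <= i < fib k.+1.
Proof.
elim: i => [//|i IH] _.
case: i IH => [|i] IH; first by exists 2.
have [k [hk /andP [h1 h2]]] := IH isT.
have [lt|eq] := ltnP i.+2 (fib k.+1).
  by exists k; rewrite lt andbT; lia.
exists k.+1; split; first lia.
have e : fib k.+1 = i.+2 by lia.
rewrite e leqnn andTb fibSS e.
have := fib_pos k ltac:(lia). lia.
Qed.

Lemma partner n i : 1 < n -> 0 < i <= n ->
  exists j, [/\ 0 < j <= n, j != i & isFib (i + j)].
Proof.
move=> hn /andP [hi0 hin].
case: (ltnP 1 i) => hi1; last first.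
  have -> : i = 1 by lia.
  by exists 2; split; [lia | done | exists 4].
have [k [hk /andP [h1 h2]]] := fib_bracket i hi0.
exists (fib k.+1 - i).
case: k hk h1 h2 => [|[|m]] // _ h1 h2.
have F2 := fibSS m.+1. have F1 := fibSS m.
have M1 := fib_mono _ _ (leqnSn m).
split.
- lia.
- apply/negP => /eqP E.
  case: m h1 h2 E F2 F1 M1 => [|m] h1 h2 E F2 F1 M1.
    have f1 : fib 1 = 1 by []. lia.
  have := fib_pos m.+1 isT. lia.
- exists m.+3; lia.
Qed.

Lemma adjF_sym n S T : @adjF n S T -> adjF T S.
Proof.
case=> [vS [vT [ne [i [j [hi [hj [hij hf]]]]]]]].
split=> //; split=> //; split; first by move=> e; apply: ne.
by exists j, i; do !split => //; [move=> e; apply: hij | rewrite addnC].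
Qed.

Lemma A_vertex n : 1 <= n -> is_vertex (A n).
Proof.
move=> hn; split => //; apply/set0Pn.
by exists (Ordinal (ltnSn n)); rewrite inE.
Qed.

Lemma to_A n S : 1 < n -> is_vertex S -> S <> A n -> @adjF n S (A n).
Proof.
move=> hn [sub ne] neA.
have [i hi] := set0Pn _ ne.
have hiA := subsetP sub _ hi; rewrite inE in hiA.
have [j [/andP [j0 jn] jne jf]] := partner n i hn ltac:(have := ltn_ord i; lia).
split => //; split; first by apply: A_vertex; lia.
split => //.
exists i, (Ordinal (jn : j < n.+1)).
do !split => //; first by rewrite inE.
by move=> e; move/eqP: jne; apply; rewrite e.
Qed.

Theorem corollary2p2 (n : nat) (hn : 1 <= n) : FibSumSetGraph_connected n.
Proof.
move=> S T vS vT.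
case: (ltnP 1 n) => hn2.
  have hS : clos_refl_trans _ (@adjF n) S (A n).
    by case: (eqVneq S (A n)) => [->|ne]; [apply: rt_refl | apply: rt_step; apply: to_A => //; apply/eqP].
  have hT : clos_refl_trans _ (@adjF n) (A n) T.
    case: (eqVneq T (A n)) => [->|ne]; first by apply: rt_refl.
    by apply: rt_step; apply: adjF_sym; apply: to_A => //; apply/eqP.
  exact: rt_trans hS hT.
have e1 : n = 1 by lia.
subst n.
suff eqA : forall U, is_vertex U -> U = A 1.
  by rewrite (eqA _ vS) (eqA _ vT); apply: rt_refl.
move=> U [sub ne]; apply/eqP; rewrite eqEsubset sub /=.
apply/subsetP => x; rewrite inE => x0.
have [y hy] := set0Pn _ ne.
have := subsetP sub _ hy; rewrite inE => y0.
have -> : x = y by apply: val_inj; have := ltn_ord x; have := ltn_ord y; rewrite /=; lia.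
done.
Qed.
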